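(* Let $q\in\mathbb{N}$ be odd, $\alpha_2\in\mathbb{Z}$ with $\gcd(\alpha_2,q)=1$, and let $q_1>1$, $q_2$ be positive integers with $q_1q_2=\operatorname{rad}(q)$. For $N\in\mathbb{N}$ with $N\le q$ define $$L(q_1):=\sum_{\substack{|x_1|,|x_2|\le N\\ \gcd(x_1^2+\alpha_2x_2^2,q_2)=1}}\left(\frac{x_1^2+\alpha_2x_2^2}{q_1}\right).$$ Then for every $\varepsilon>0$, $L(q_1)\ll_\varepsilon Nq_1^2q^{\varepsilon}$.
   Context: $\operatorname{rad}(q)$ is the product of the distinct primes dividing $q$; $\left(\frac{\cdot}{q_1}\right)$ is the Jacobi symbol. *)

(* Defs.v *)
From HB Require Import structures.
From mathcomp Require Import all_boot all_order all_algebra.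
From mathcomp Require Import reals exp.
Set Implicit Arguments. Unset Strict Implicit. Unset Printing Implicit Defensive.
Import Order.TTheory GRing.Theory Num.Theory.
Local Open Scope ring_scope.

Definition radical (n : nat) : nat := (\prod_(p <- primes n) p)%N.

Definition legendre (a : int) (p : nat) : int :=
  if (p%:Z %| a)%Z then 0
  else if [exists x : 'I_p, (p%:Z %| (x%:Z * x%:Z - a))%Z] then 1 else -1.

Definition jacobi (a : int) (n : nat) : int :=
  \prod_(p <- primes n) (legendre a p) ^+ (logn p n).

Definition Lsum (q1 q2 N : nat) (a2 : int) : int :=
  \sum_(i < (2 * N).+1) \sum_(j < (2 * N).+1)
    let x1 := i%:Z - N%:Z in
    let x2 := j%:Z - N%:Z in
    let v := x1 ^+ 2 + a2 * x2 ^+ 2 in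
    if coprimez v q2%:Z then jacobi v q1 else 0.

(* Main.v *)
Require Import Defs.
From HB Require Import structures.
From mathcomp Require Import all_boot all_order all_algebra.
From mathcomp Require Import reals exp.
From mathcomp Require Import ring lra zify.
Import Order.TTheory GRing.Theory Num.Theory.
Local Open Scope ring_scope.
Lemma modz_absz_lt (x : int) (p : nat) : (0 < p)%N -> (`|(x %% p%:Z)%Z| < p)%N.
Proof.
move=> p0; have h1 := @modz_ge0 x p%:Z; have h2 := @ltz_pmod x p%:Z.
have : p%:Z != 0 by rewrite eqz_nat -lt0n.
move=> /h1 {}h1; have : 0 < p%:Z by rewrite ltz_nat.
move=> /h2 {}h2. lia.
Qed.

Lemma dvdz_sub_mod (x : int) (p : int) : (p %| x - (x %% p)%Z)%Z.
Proof.
have e := divz_eq x p.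
have -> : x - (x %% p)%Z = (x %/ p)%Z * p.
  by rewrite [X in X - _ = _]e; ring.
by apply: dvdz_mull; rewrite dvdzz.
Qed.

Lemma dvd_small_eq (k1 k2 : nat) (p : nat) : (k1 < p)%N -> (k2 < p)%N ->
  (p%:Z %| k1%:Z - k2%:Z)%Z -> k1 = k2.
Proof.
move=> h1 h2; rewrite dvdzE /= => hd.
have [e|ne] := eqVneq `|k1%:Z - k2%:Z|%N 0%N.
  lia.
have := dvdn_leq _ hd. rewrite lt0n ne => /(_ isT). lia.
Qed.

Lemma sum_reindex (V : nmodType) (p : nat) (m w : int) (h : int -> V) :
  (0 < p)%N -> coprimez m p%:Z -> (forall x y, (p%:Z %| x - y)%Z -> h x = h y) ->
  \sum_(k < p) h (w + m * k%:Z) = \sum_(a < p) h a%:Z.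
Proof.
move=> p0 cop hP.
pose f (k : 'I_p) : 'I_p := Ordinal (@modz_absz_lt (w + m * k%:Z) p p0).
have fE : forall k : 'I_p, (f k)%:Z = ((w + m * k%:Z) %% p%:Z)%Z.
  move=> k /=; rewrite gez0_abs //; apply: modz_ge0; rewrite eqz_nat -lt0n //.
transitivity (\sum_(k < p) h (f k)%:Z).
  apply: eq_bigr => k _; apply: hP; rewrite fE; exact: dvdz_sub_mod.
have finj : injective f.
  move=> k1 k2 /(congr1 (fun o : 'I_p => (o : nat)%:Z)) => e.
  rewrite !fE in e.
  have : ((w + m * k1%:Z) == (w + m * k2%:Z) %[mod p%:Z])%Z by rewrite e.
  rewrite eqz_mod_dvd (_ : w + m * k1%:Z - (w + m * k2%:Z) = m * (k1%:Z - k2%:Z)); last by ring.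
  rewrite Gauss_dvdzr; last by rewrite coprimez_sym.
  move=> hd; apply: val_inj; exact: dvd_small_eq (ltn_ord k1) (ltn_ord k2) hd.
symmetry; exact: (reindex_inj (F := fun a : 'I_p => h a%:Z) finj).
Qed.
Lemma sum_block (V : nmodType) (a b : nat) (h : int -> V) :
  \sum_(x < a * b) h x%:Z = \sum_(k < b) \sum_(w < a) h (w%:Z + a%:Z * k%:Z).
Proof.
elim: b => [|b IH]; first by rewrite muln0 !big_ord0.
rewrite mulnSr big_split_ord IH big_ord_recr /=; congr (_ + _).
apply: eq_bigr => w _ /=; congr h; rewrite PoszD PoszM; ring.
Qed.

Definition dvz (m : nat) (x : int) : bool := (m%:Z %| x)%Z.

Definition periodic {V : Type} (g : int -> V) (d : nat) :=
  forall x x', dvz d (x - x') -> g x = g x'.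

Lemma sum_window (V : nmodType) (q1 d : nat) (u y : int) (g : int -> V) :
  (0 < q1)%N -> (0 < d)%N -> coprimez q1%:Z d%:Z -> periodic g d ->
  \sum_(i < q1 * d) (if dvz q1 (y + i%:Z - u) then g (y + i%:Z) else 0)
   = \sum_(s < d) g s%:Z.
Proof.
move=> q0 d0 cop gP.
pose H x := if dvz q1 (x - u) then g x else 0.
have HP : forall x x', ((q1 * d)%N%:Z %| x - x')%Z -> H x = H x'.
  move=> x x' hd; rewrite /H.
  have h1 : dvz q1 (x - x') by apply: dvdz_trans hd; rewrite PoszM dvdz_mulr.
  have h2 : dvz d (x - x') by apply: dvdz_trans hd; rewrite PoszM dvdz_mull.
  rewrite (gP _ _ h2).
  have -> : dvz q1 (x - u) = dvz q1 (x' - u); last by [].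
  rewrite /dvz (_ : x - u = (x - x') + (x' - u)); last by ring.
  by rewrite rpredDl.
transitivity (\sum_(i < q1 * d) H (y + 1 * i%:Z)).
  by apply: eq_bigr => i _; rewrite mul1r /H addrAC.
have c1 : coprimez 1 (q1 * d)%N%:Z by rewrite coprimezE /= coprime1n.
have m0 : (0 < q1 * d)%N by rewrite muln_gt0 q0 d0.
rewrite (@sum_reindex _ (q1 * d) 1 y H m0 c1 HP).
rewrite sum_block exchange_big /=.
transitivity (\sum_(w < q1) (if dvz q1 (w%:Z - u) then \sum_(s < d) g s%:Z else 0)).
  apply: eq_bigr => w _.
  have E : forall k : 'I_d, dvz q1 (w%:Z + q1%:Z * k%:Z - u) = dvz q1 (w%:Z - u).
    move=> k; rewrite /dvz (_ : w%:Z + q1%:Z * k%:Z - u = q1%:Z * k%:Z + (w%:Z - u)); last by ring.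
    by rewrite rpredDl // dvdz_mulr.
  rewrite /H; under eq_bigr => k _ do rewrite E.
  case: ifP => _; last by rewrite big1.
  by rewrite (@sum_reindex _ d q1 w g d0 cop gP).
have w0P : (`|(u %% q1%:Z)%Z| < q1)%N by apply: modz_absz_lt.
rewrite (bigD1 (Ordinal w0P)) //= [X in _ + X]big1 ?addr0.
  rewrite gez0_abs; last by apply: modz_ge0; rewrite eqz_nat -lt0n.
  by rewrite /dvz -eqz_mod_dvd modz_mod eqxx.
move=> w /eqP ne; case: ifP => // hw; exfalso; apply: ne.
apply: val_inj => /=; apply: (@dvd_small_eq _ _ q1) => //.
rewrite gez0_abs; last by apply: modz_ge0; rewrite eqz_nat -lt0n.
rewrite (_ : w%:Z - (u %% q1%:Z)%Z = (w%:Z - u) + (u - (u %% q1%:Z)%Z)); last by ring.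
by rewrite rpredD // dvdz_sub_mod.
Qed.

Lemma sum_AP (R : realFieldType) (q1 d : nat) (u : int) (g : int -> R) (n : nat) (y : int) :
  (0 < q1)%N -> (0 < d)%N -> coprimez q1%:Z d%:Z -> periodic g d -> (forall x, 0 <= g x) ->
  `| \sum_(i < n) (if dvz q1 (y + i%:Z - u) then g (y + i%:Z) else 0)
     - n%:R / (q1 * d)%N%:R * \sum_(s < d) g s%:Z | <= \sum_(s < d) g s%:Z.
Proof.
move=> q0 d0 cop gP g0.
set G := \sum_(s < d) g s%:Z.
have G0 : 0 <= G by apply: sumr_ge0.
have M0 : (0 < q1 * d)%N by rewrite muln_gt0 q0 d0.
have M0R : 0 < (q1 * d)%N%:R :> R by rewrite ltr0n.
elim/ltn_ind: n y => n IH y.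
set F := fun i : nat => if dvz q1 (y + i%:Z - u) then g (y + i%:Z) else 0.
have F0 : forall i, 0 <= F i by move=> i; rewrite /F; case: ifP.
case: (ltnP n (q1 * d)) => hn.
  have S0 : 0 <= \sum_(i < n) F i by apply: sumr_ge0.
  have S1 : \sum_(i < n) F i <= G.
    rewrite /G -(@sum_window _ q1 d u y g q0 d0 cop gP) (big_ord_widen (q1 * d) F (ltnW hn)).
    rewrite [X in _ <= X](bigID (fun i : 'I_(q1 * d) => (i < n)%N)) /= lerDl.
    by apply: sumr_ge0 => i _; exact: (F0 i).
  have t1 : n%:R / (q1 * d)%N%:R <= 1 :> R.
    by rewrite ler_pdivrMr // mul1r ler_nat ltnW.
  have t0 : 0 <= n%:R / (q1 * d)%N%:R :> R by apply: divr_ge0.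
  have : n%:R / (q1 * d)%N%:R * G <= G.
    by rewrite -[X in _ <= X]mul1r ler_wpM2r.
  have : 0 <= n%:R / (q1 * d)%N%:R * G by apply: mulr_ge0.
  rewrite ler_norml; lra.
rewrite -(subnKC hn) big_split_ord /=.
have -> : \sum_(i < q1 * d) F (lshift (n - q1 * d) i) = G.
  by rewrite /G -(@sum_window _ q1 d u y g q0 d0 cop gP).
have hlt : (n - q1 * d < n)%N.
  by rewrite ltn_subrL M0 /=; apply: leq_trans hn.
have := IH _ hlt (y + (q1 * d)%N%:Z).
set S' := \sum_(i < n - q1 * d) _.
have -> : \sum_(i < n - q1 * d) F (rshift (q1 * d) i) = S'.
  apply: eq_bigr => i _; rewrite /F /= PoszD addrA; by [].
rewrite natrD (_ : ((q1 * d)%N%:R + (n - q1 * d)%:R) / (q1 * d)%N%:R * G =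
   G + (n - q1 * d)%:R / (q1 * d)%N%:R * G); last first.
  by field; rewrite !pnatr_eq0 -!lt0n d0 q0.
have -> : G + S' - (G + (n - q1 * d)%:R / (q1 * d)%:R * G) =
   S' - (n - q1 * d)%:R / (q1 * d)%:R * G by ring.
by [].
Qed.

Definition Csum {R : nmodType} (n : nat) (y : int) (q1 : nat) (u1 u2 : int)
  (h : int -> int -> R) : R :=
  \sum_(j < n) (if dvz q1 (y + j%:Z - u2) then
     \sum_(i < n) (if dvz q1 (y + i%:Z - u1) then h (y + i%:Z) (y + j%:Z) else 0)
   else 0).

Lemma count2D (R : realFieldType) (q1 d n : nat) (y u1 u2 : int) (h : int -> int -> R) (K : R) :
  (0 < q1)%N -> (0 < d)%N -> coprimez q1%:Z d%:Z ->
  (forall x2, periodic (fun x1 => h x1 x2) d) ->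
  (forall x1, periodic (fun x2 => h x1 x2) d) ->
  (forall x1 x2, 0 <= h x1 x2) ->
  (forall x2, \sum_(s < d) h s%:Z x2 <= K) ->
  `| Csum n y q1 u1 u2 h - (n%:R / (q1 * d)%N%:R) ^+ 2 *
        \sum_(t < d) \sum_(s < d) h s%:Z t%:Z | <= K * (2 * n%:R / q1%:R + 1).
Proof.
move=> q0 d0 cop hP1 hP2 h0 hK.
set c := n%:R / (q1 * d)%N%:R.
pose rho x2 := \sum_(s < d) h s%:Z x2.
have rho0 : forall x2, 0 <= rho x2 by move=> x2; apply: sumr_ge0.
have K0 : 0 <= K by apply: le_trans (hK 0); apply: rho0.
have c0 : 0 <= c by apply: divr_ge0.
pose A (j : 'I_n) := dvz q1 (y + j%:Z - u2).
pose T (j : 'I_n) := \sum_(i < n) (if dvz q1 (y + i%:Z - u1) then h (y + i%:Z) (y + j%:Z) else 0).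
have hT : forall j, `|T j - c * rho (y + j%:Z)| <= K.
  move=> j; apply: le_trans (hK (y + j%:Z)).
  exact: (@sum_AP R q1 d u1 (fun x1 => h x1 (y + j%:Z)) n y q0 d0 cop (hP1 _) (fun x => h0 _ _)).
have rhoP : periodic rho d.
  move=> x x' hx; apply: eq_bigr => s _; exact: hP2.
set Rr := \sum_(t < d) \sum_(s < d) h s%:Z t%:Z.
have hE2 := @sum_AP R q1 d u2 rho n y q0 d0 cop rhoP rho0.
have cop1 : coprimez q1%:Z 1%N%:Z by rewrite coprimezE /= coprimen1.
have hcnt := @sum_AP R q1 1 u2 (fun _ => 1) n y q0 isT cop1 (fun _ _ _ => erefl) (fun _ => ler01).
rewrite big_ord1 muln1 mulr1 in hcnt.
set cnt := \sum_(i < n) _ in hcnt.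
have cntle : cnt <= n%:R / q1%:R + 1.
  by move: hcnt; rewrite ler_norml; case/andP => _; rewrite lerBlDr addrC.
have Rrle : Rr <= d%:R * K.
  have -> : d%:R * K = \sum_(t < d) K by rewrite sumr_const card_ord mulr_natl.
  by apply: ler_sum => t _; exact: hK.
set E1 := \sum_(j < n) (if A j then T j - c * rho (y + j%:Z) else 0).
set E2 := \sum_(j < n) (if A j then rho (y + j%:Z) else 0).
have -> : Csum n y q1 u1 u2 h = E1 + c * E2.
  rewrite /Csum /E1 /E2 mulr_sumr -big_split; apply: eq_bigr => j _ /=.
  rewrite /A /T; case: ifP => _; last by rewrite mulr0 addr0.
  by rewrite subrK.
have hE1 : `|E1| <= K * cnt.
  rewrite /cnt mulr_sumr; apply: le_trans (ler_norm_sum _ _ _) _.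
  apply: ler_sum => j _; rewrite /A; case: ifP => _; last by rewrite normr0 mulr0.
  by rewrite mulr1; apply: hT.
have -> : E1 + c * E2 - c ^+ 2 * Rr = E1 + c * (E2 - c * Rr) by ring.
apply: le_trans (ler_normD _ _) _.
rewrite normrM (ger0_norm c0).
have h2 : c * `|E2 - c * Rr| <= c * Rr by apply: ler_wpM2l.
have h3 : c * Rr <= n%:R / q1%:R * K.
  apply: le_trans (ler_wpM2l c0 Rrle) _.
  rewrite /c natrM (_ : n%:R / (q1%:R * d%:R) * (d%:R * K) = n%:R / q1%:R * K) //.
  by field; rewrite !pnatr_eq0 -!lt0n d0 q0.
have h4 : K * cnt <= K * (n%:R / q1%:R + 1) by apply: ler_wpM2l.
have -> : K * (2 * n%:R / q1%:R + 1) = K * (n%:R / q1%:R + 1) + n%:R / q1%:R * K.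
  by rewrite -mulrA; ring.
lra.
Qed.

Lemma dvz_EuclidM p a b : prime p -> dvz p (a * b) = dvz p a || dvz p b.
Proof. by move=> pp; rewrite /dvz !dvdzE abszM /=; apply: Euclid_dvdM. Qed.

Lemma coprime_prod_primes p (D : seq nat) : prime p -> all prime D -> p \notin D ->
  coprime p (\prod_(r <- D) r).
Proof.
move=> pp aD pD; rewrite prime_coprime // Euclid_dvd_prod // big_has.
apply/hasPn => r rD; rewrite dvdn_prime2 //; last exact: (allP aD).
by apply/negP => /eqP e; rewrite e rD in pD.
Qed.

Lemma sum_pred1_ord (R : nmodType) n (r : 'I_n) (x : R) :
  \sum_(a < n) (if a == r then x else 0) = x.
Proof. by rewrite -big_mkcond big_pred1_eq. Qed.

Lemma root_prime (R : realFieldType) (p : nat) (c : int) : prime p ->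
  \sum_(a < p) (if dvz p (a%:Z ^+ 2 + c) then 1 else 0 : R) <= 2.
Proof.
move=> pp; have p0 := prime_gt0 pp.
case: (pickP (fun a : 'I_p => dvz p (a%:Z ^+ 2 + c))) => [a0 ha0|none]; last first.
  rewrite big1 ?ler0n // => a _; by rewrite none.
have r2P : (`|((- a0%:Z) %% p%:Z)%Z| < p)%N by apply: modz_absz_lt.
pose r2 : 'I_p := Ordinal r2P.
have r2E : (r2 : nat)%:Z = ((- a0%:Z) %% p%:Z)%Z.
  rewrite /= gez0_abs //; apply: modz_ge0; rewrite eqz_nat -lt0n //.
apply: (@le_trans _ _ (\sum_(a < p) ((if a == a0 then 1 else 0) + (if a == r2 then 1 else 0)))).
  apply: ler_sum => a _; case: ifP => ha; last first.
    by apply: addr_ge0; case: ifP.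
  have : dvz p ((a%:Z - a0%:Z) * (a%:Z + a0%:Z)).
    rewrite (_ : (a%:Z - a0%:Z) * (a%:Z + a0%:Z) = (a%:Z ^+ 2 + c) - (a0%:Z ^+ 2 + c)); last by ring.
    by rewrite /dvz rpredB.
  rewrite dvz_EuclidM // => /orP [h1|h2].
    have -> : a == a0 by apply/eqP; apply: ord_inj; exact: (@dvd_small_eq a a0 p (ltn_ord a) (ltn_ord a0) h1).
    by rewrite lerDl; case: ifP.
  have -> : a == r2.
    apply/eqP; apply: ord_inj; apply: (@dvd_small_eq a r2 p (ltn_ord a) (ltn_ord r2)); rewrite r2E.
    rewrite (_ : a%:Z - ((- a0%:Z) %% p%:Z)%Z = (a%:Z + a0%:Z) + (- a0%:Z - ((- a0%:Z) %% p%:Z)%Z)); last by ring.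
    by rewrite /dvz rpredD // dvdz_sub_mod.
  by rewrite lerDr; case: ifP.
by rewrite big_split /= !sum_pred1_ord.
Qed.

Lemma prod_primes_gt0 (D : seq nat) : all prime D -> (0 < \prod_(r <- D) r)%N.
Proof.
elim: D => [|p D IH] /=; first by rewrite big_nil.
by move=> /andP [pp aD]; rewrite big_cons muln_gt0 prime_gt0 // IH.
Qed.

Lemma root_prod (R : realFieldType) (D : seq nat) (c : int) : uniq D -> all prime D ->
  \sum_(s < \prod_(p <- D) p)
     (if dvz (\prod_(p <- D) p) (s%:Z ^+ 2 + c) then 1 else 0 : R) <= 2 ^+ size D.
Proof.
elim: D c => [|p D IH] c /=.
  move=> _ _; rewrite big_nil big_ord1 expr0; case: ifP => _ //.
move=> /andP [pD uD] /andP [pp aD].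
have d0 := @prod_primes_gt0 D aD.
have cop : coprimez (\prod_(r <- D) r)%:Z p%:Z.
  by rewrite coprimezE /= coprime_sym; apply: coprime_prod_primes.
move: d0 cop (IH c uD aD); set d := \prod_(r <- D) r => d0 cop IHc.
rewrite big_cons -/d mulnC (@sum_block _ d p (fun x => if dvz (d * p) (x ^+ 2 + c) then 1 else 0)) exprS.
pose F1 (w : int) := (if dvz d (w ^+ 2 + c) then 1 else 0 : R).
pose F2 (x : int) := (if dvz p (x ^+ 2 + c) then 1 else 0 : R).
apply: (@le_trans _ _ (\sum_(k < p) \sum_(w < d) F1 w%:Z * F2 (w%:Z + d%:Z * k%:Z))).
  apply: ler_sum => k _; apply: ler_sum => w _.
  case: ifP => hx; last by apply: mulr_ge0; [rewrite /F1|rewrite /F2]; case: ifP.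
  have hd : dvz d ((w%:Z + d%:Z * k%:Z) ^+ 2 + c).
    by apply: dvdz_trans hx; rewrite PoszM dvdz_mulr.
  have hp : dvz p ((w%:Z + d%:Z * k%:Z) ^+ 2 + c).
    by apply: dvdz_trans hx; rewrite PoszM dvdz_mull.
  rewrite /F1 /F2 hp.
  have -> : dvz d (w%:Z ^+ 2 + c).
    rewrite (_ : w%:Z ^+ 2 + c = ((w%:Z + d%:Z * k%:Z) ^+ 2 + c) - d%:Z * (k%:Z * (2 * w%:Z + d%:Z * k%:Z))); last by ring.
    by rewrite /dvz rpredB // dvdz_mulr.
  by rewrite mulr1.
rewrite exchange_big /=.
have F2P : periodic F2 p.
  move=> x x' hx; rewrite /F2.
  have -> : dvz p (x ^+ 2 + c) = dvz p (x' ^+ 2 + c); last by [].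
  rewrite (_ : x ^+ 2 + c = (x - x') * (x + x') + (x' ^+ 2 + c)); last by ring.
  by rewrite /dvz rpredDl // dvdz_mulr.
under eq_bigr => w _ do rewrite -mulr_sumr (@sum_reindex _ p d%:Z w%:Z F2 (prime_gt0 pp) cop F2P).
apply: (@le_trans _ _ (\sum_(w < d) F1 w%:Z * 2)).
  apply: ler_sum => w _; apply: ler_wpM2l; first by rewrite /F1; case: ifP.
  exact: root_prime.
rewrite -mulr_suml mulrC; apply: ler_wpM2l => //.
Qed.

Definition Qf (a2 x1 x2 : int) : int := x1 ^+ 2 + a2 * x2 ^+ 2.

Definition hPD (R : nzRingType) (a2 : int) (P D : seq nat) (x1 x2 : int) : R :=
  (if dvz (\prod_(r <- D) r) (Qf a2 x1 x2) then 1 else 0) *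
  \prod_(p <- P) (if dvz p (Qf a2 x1 x2) then 0 else 1).

Lemma Csum_sub (R : zmodType) n y q1 u1 u2 (h1 h2 : int -> int -> R) :
  Csum n y q1 u1 u2 (fun x1 x2 => h1 x1 x2 - h2 x1 x2) =
  Csum n y q1 u1 u2 h1 - Csum n y q1 u1 u2 h2.
Proof.
rewrite /Csum -sumrB; apply: eq_bigr => j _; case: ifP => _; last by rewrite subr0.
rewrite -sumrB; apply: eq_bigr => i _; case: ifP => _ //; by rewrite subr0.
Qed.

Lemma Csum_ext (R : nmodType) n y q1 u1 u2 (h1 h2 : int -> int -> R) :
  (forall x1 x2, h1 x1 x2 = h2 x1 x2) ->
  Csum n y q1 u1 u2 h1 = Csum n y q1 u1 u2 h2.
Proof.
move=> e; rewrite /Csum; apply: eq_bigr => j _; case: ifP => // _.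
by apply: eq_bigr => i _; rewrite e.
Qed.

Lemma coprime_prod_all q1 (D : seq nat) : all (coprime q1) D -> coprime q1 (\prod_(r <- D) r).
Proof.
elim: D => [|p D IH] /=; first by rewrite big_nil coprimen1.
by move=> /andP [h1 h2]; rewrite big_cons coprimeMr h1 IH.
Qed.

Lemma dvz_mul_coprime (m k : nat) (x : int) : coprime m k ->
  dvz (m * k) x = dvz m x && dvz k x.
Proof. by move=> cop; rewrite /dvz !dvdzE /=; apply: Gauss_dvd. Qed.

Lemma sieve (R : realFieldType) (q1 n : nat) (y a2 : int) (P D : seq nat) :
  (0 < q1)%N -> uniq P -> uniq D -> all prime P -> all prime D ->
  all (fun p => p \notin D) P -> all (coprime q1) P -> all (coprime q1) D ->
  exists A : R, forall u1 u2,
    `| Csum n y q1 u1 u2 (hPD R a2 P D) - A | <=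
       4 ^+ size P * 2 ^+ size D * (2 * n%:R / q1%:R + 1).
Proof.
move=> q0; elim: P D => [|p P IH] D /=.
  move=> _ uD _ aD _ _ cD.
  set d := \prod_(r <- D) r.
  have d0 : (0 < d)%N by apply: prod_primes_gt0.
  have cop : coprimez q1%:Z d%:Z by rewrite coprimezE /=; apply: coprime_prod_all.
  exists ((n%:R / (q1 * d)%N%:R) ^+ 2 * \sum_(t < d) \sum_(s < d) hPD R a2 [::] D s%:Z t%:Z).
  move=> u1 u2; rewrite expr0 mul1r.
  have hp1 : forall x2, periodic (fun x1 => hPD R a2 [::] D x1 x2) d.
    move=> x2 x x' hx; rewrite /hPD /Qf -/d !big_nil.
    have -> : dvz d (x ^+ 2 + a2 * x2 ^+ 2) = dvz d (x' ^+ 2 + a2 * x2 ^+ 2); last by [].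
    rewrite (_ : x ^+ 2 + a2 * x2 ^+ 2 = (x - x') * (x + x') + (x' ^+ 2 + a2 * x2 ^+ 2)); last by ring.
    by rewrite /dvz rpredDl // dvdz_mulr.
  have hp2 : forall x1, periodic (fun x2 => hPD R a2 [::] D x1 x2) d.
    move=> x1 x x' hx; rewrite /hPD /Qf -/d !big_nil.
    have -> : dvz d (x1 ^+ 2 + a2 * x ^+ 2) = dvz d (x1 ^+ 2 + a2 * x' ^+ 2); last by [].
    rewrite (_ : x1 ^+ 2 + a2 * x ^+ 2 = (x - x') * (a2 * (x + x')) + (x1 ^+ 2 + a2 * x' ^+ 2)); last by ring.
    by rewrite /dvz rpredDl // dvdz_mulr.
  have h0 : forall x1 x2, 0 <= hPD R a2 [::] D x1 x2.
    by move=> x1 x2; rewrite /hPD big_nil mulr1; case: ifP.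
  have hK : forall x2, \sum_(s < d) hPD R a2 [::] D s%:Z x2 <= 2 ^+ size D.
    move=> x2; rewrite /hPD /Qf -/d.
    rewrite (eq_bigr (fun s : 'I_d => if dvz d (s%:Z ^+ 2 + a2 * x2 ^+ 2) then 1 else 0)); last first.
      by move=> s _; rewrite big_nil mulr1.
    exact: root_prod.
  exact: (@count2D R q1 d n y u1 u2 (hPD R a2 [::] D) _ q0 d0 cop hp1 hp2 h0 hK).
move=> /andP [pP uP] uD /andP [pp aP] aD /andP [pD dP] /andP [cp cP] cD.
have [A1 h1] := IH D uP uD aP aD dP cP cD.
have uD' : uniq (p :: D) by rewrite /= pD uD.
have aD' : all prime (p :: D) by rewrite /= pp aD.
have dP' : all (fun r => r \notin p :: D) P.
  apply/allP => r rP; rewrite in_cons negb_or (allP dP r rP) andbT.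
  by apply/eqP => e; rewrite -e rP in pP.
have cD' : all (coprime q1) (p :: D) by rewrite /= cp cD.
have [A2 h2] := IH (p :: D) uP uD' aP aD' dP' cP cD'.
exists (A1 - A2) => u1 u2.
have -> : Csum n y q1 u1 u2 (hPD R a2 (p :: P) D) =
   Csum n y q1 u1 u2 (hPD R a2 P D) - Csum n y q1 u1 u2 (hPD R a2 P (p :: D)).
  rewrite -Csum_sub; apply: Csum_ext => x1 x2.
  rewrite /hPD big_cons big_cons.
  have cpd : coprime p (\prod_(r <- D) r) by apply: coprime_prod_primes.
  rewrite dvz_mul_coprime //.
  by case: (dvz p _); case: (dvz (\prod_(r <- D) r) _); rewrite ?mul0r ?mul1r ?mulr0 ?subr0 ?subrr.
have := h1 u1 u2; have := h2 u1 u2.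
set Z := (2 * n%:R / q1%:R + 1).
have Z0 : 0 <= Z by rewrite /Z addr_ge0 // divr_ge0 // mulr_ge0.
set B := 4 ^+ size P * 2 ^+ size D.
have B0 : 0 <= B by rewrite /B mulr_ge0 // exprn_ge0.
rewrite /= !exprS => e2 e1.
have -> : Csum n y q1 u1 u2 (hPD R a2 P D) - Csum n y q1 u1 u2 (hPD R a2 P (p :: D)) - (A1 - A2) =
  (Csum n y q1 u1 u2 (hPD R a2 P D) - A1) - (Csum n y q1 u1 u2 (hPD R a2 P (p :: D)) - A2) by ring.
apply: le_trans (ler_normB _ _) _.
have : 0 <= B * Z by apply: mulr_ge0.
rewrite /B in e1 e2 *.
set a := 4 ^+ size P in e1 e2 *; set b := 2 ^+ size D in e1 e2 *.
have : a * (2 * b) * Z = 2 * (a * b * Z) by ring.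
have : 4 * a * b * Z = 4 * (a * b * Z) by ring.
lra.
Qed.

Lemma legendre_periodic (p : nat) (a a' : int) : dvz p (a - a') -> legendre a p = legendre a' p.
Proof.
move=> h; rewrite /legendre.
have e1 : (p%:Z %| a)%Z = (p%:Z %| a')%Z.
  rewrite (_ : a = (a - a') + a'); last by ring.
  by rewrite rpredDl.
have e2 : [exists x : 'I_p, (p%:Z %| x%:Z * x%:Z - a)%Z] = [exists x : 'I_p, (p%:Z %| x%:Z * x%:Z - a')%Z].
  apply: eq_existsb => x.
  rewrite (_ : x%:Z * x%:Z - a = (x%:Z * x%:Z - a') - (a - a')); last by ring.
  by rewrite rpredBr.
by rewrite e1 e2.
Qed.

Lemma jacobi_periodic (n : nat) (a a' : int) : dvz n (a - a') -> jacobi a n = jacobi a' n.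
Proof.
move=> h; rewrite /jacobi; apply: eq_big_seq => r hr; congr (_ ^+ _).
apply: legendre_periodic; apply: dvdz_trans h.
by move: hr; rewrite mem_primes => /and3P [_ _ hd]; rewrite dvdzE.
Qed.

Lemma jacobi_mulp (v : int) (m p : nat) : prime p -> (0 < m)%N -> ~~ (p %| m)%N ->
  jacobi v (m * p)%N = legendre v p * jacobi v m.
Proof.
move=> pp m0 pm; rewrite /jacobi.
have pe : perm_eq (primes (m * p)) (p :: primes m).
  apply: uniq_perm; first exact: primes_uniq.
    by rewrite /= primes_uniq andbT mem_primes (negbTE pm) !andbF.
  move=> r; rewrite in_cons !mem_primes muln_gt0 m0 prime_gt0 //=.
  case: (eqVneq r p) => [->|ne]; first by rewrite pp dvdn_mull.
  rewrite /=; case pr: (prime r) => //=.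
  by rewrite Euclid_dvdM // (dvdn_prime2 pr pp) (negbTE ne) orbF.
rewrite (perm_big _ pe) big_cons.
have cpm : coprime p m by rewrite prime_coprime.
rewrite (lognM p m0 (prime_gt0 pp)) (logn_prime p pp) eqxx (logn_coprime cpm).
rewrite add0n expr1; congr (_ * _); apply: eq_big_seq => r hr.
have r0 : (0 < r)%N by move: hr; rewrite mem_primes => /andP [/prime_gt0].
rewrite (lognM r m0 (prime_gt0 pp)) (logn_prime r pp).
have -> : (r == p) = false.
  by apply/negP => /eqP e; move: hr; rewrite e mem_primes (negbTE pm) !andbF.
by rewrite addn0.
Qed.

Lemma sum_dvd_one (V : nmodType) (p : nat) (c : int) (x : V) : (0 < p)%N ->
  \sum_(t < p) (if dvz p (t%:Z - c) then x else 0) = x.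
Proof.
move=> p0.
have w0P : (`|(c %% p%:Z)%Z| < p)%N by apply: modz_absz_lt.
have w0E : (Ordinal w0P : nat)%:Z = (c %% p%:Z)%Z.
  rewrite /= gez0_abs //; apply: modz_ge0; rewrite eqz_nat -lt0n //.
rewrite (bigD1 (Ordinal w0P)) //= [X in _ + X]big1 ?addr0.
  rewrite ifT //; rewrite w0E (_ : (c %% p%:Z)%Z - c = - (c - (c %% p%:Z)%Z)); last by ring.
  by rewrite /dvz rpredN dvdz_sub_mod.
move=> w /eqP ne; case: ifP => // hw; exfalso; apply: ne.
apply: ord_inj; apply: (@dvd_small_eq _ _ p) => //.
rewrite -/(nat_of_ord (Ordinal w0P)) w0E.
rewrite (_ : w%:Z - (c %% p%:Z)%Z = (w%:Z - c) + (c - (c %% p%:Z)%Z)); last by ring.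
by rewrite rpredD // dvdz_sub_mod.
Qed.

Lemma roots_pm (p : nat) (a a0 c : int) : prime p -> dvz p (a0 ^+ 2 + c) -> dvz p (a ^+ 2 + c) ->
  dvz p (a - a0) || dvz p (a + a0).
Proof.
move=> pp h0 h; rewrite -dvz_EuclidM //.
rewrite (_ : (a - a0) * (a + a0) = (a ^+ 2 + c) - (a0 ^+ 2 + c)); last by ring.
by rewrite /dvz rpredB.
Qed.

Lemma dvz_sq (p : nat) (y : int) : prime p -> dvz p (y ^+ 2) = dvz p y.
Proof. by move=> pp; rewrite expr2 dvz_EuclidM // orbb. Qed.

Lemma legendre_count (v : int) (p : nat) : prime p -> odd p ->
  legendre v p = \sum_(y < p) (if dvz p (y%:Z ^+ 2 - v) then 1 else 0) - 1.
Proof.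
move=> pp op; have p0 := prime_gt0 pp; rewrite /legendre.
case hv: (p%:Z %| v)%Z.
  rewrite (eq_bigr (fun y : 'I_p => if dvz p (y%:Z - 0) then (1 : int) else 0)).
    by rewrite sum_dvd_one // subrr.
  move=> y _; rewrite subr0.
  have -> : dvz p (y%:Z ^+ 2 - v) = dvz p (y%:Z ^+ 2) ; last by rewrite dvz_sq.
  by rewrite /dvz rpredBr.
case: existsP => [[x0 hx0]|nex].
  have x1P : (`|((- x0%:Z) %% p%:Z)%Z| < p)%N by apply: modz_absz_lt.
  set x1 := Ordinal x1P.
  have x1E : (x1 : nat)%:Z = ((- x0%:Z) %% p%:Z)%Z.
    rewrite /= gez0_abs //; apply: modz_ge0; rewrite eqz_nat -lt0n //.
  have hx1 : dvz p (x1%:Z + x0%:Z).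
    rewrite x1E (_ : ((- x0%:Z) %% p%:Z)%Z + x0%:Z = - ((- x0%:Z) - ((- x0%:Z) %% p%:Z)%Z)); last by ring.
    by rewrite /dvz rpredN dvdz_sub_mod.
  have hx0' : dvz p (x0%:Z ^+ 2 + - v) by rewrite expr2.
  have key : forall y : 'I_p, dvz p (y%:Z ^+ 2 - v) = dvz p (y%:Z - x0%:Z) || dvz p (y%:Z - x1%:Z).
    move=> y; apply/idP/idP.
      move=> hy; have := @roots_pm p y x0 (- v) pp hx0' hy; case/orP => [->//|h2].
      apply/orP; right.
      rewrite (_ : y%:Z - x1%:Z = (y%:Z + x0%:Z) - (x1%:Z + x0%:Z)); last by ring.
      by rewrite /dvz rpredB.
    case/orP => h.
      rewrite (_ : y%:Z ^+ 2 - v = (y%:Z - x0%:Z) * (y%:Z + x0%:Z) + (x0%:Z ^+ 2 + - v)); last by ring.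
      by rewrite /dvz rpredD // dvdz_mulr.
    rewrite (_ : y%:Z ^+ 2 - v = (y%:Z + x0%:Z) * (y%:Z - x0%:Z) + (x0%:Z ^+ 2 + - v)); last by ring.
    rewrite /dvz rpredD // dvdz_mulr //.
    rewrite (_ : y%:Z + x0%:Z = (y%:Z - x1%:Z) + (x1%:Z + x0%:Z)); last by ring.
    by rewrite rpredD.
  have excl : forall y : 'I_p, ~~ (dvz p (y%:Z - x0%:Z) && dvz p (y%:Z - x1%:Z)).
    move=> y; apply/negP => /andP [h1 h2].
    have h3 : dvz p (2 * x0%:Z).
      rewrite (_ : 2 * x0%:Z = (x1%:Z + x0%:Z) - (y%:Z - x0%:Z) + (y%:Z - x1%:Z)); last by ring.
      by rewrite /dvz; apply: rpredD => //; apply: rpredB.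
    have h4 : dvz p x0%:Z.
      move: h3; rewrite dvz_EuclidM // => /orP [|//].
      rewrite /dvz dvdzE /= => hd.
      have hle : (p <= 2)%N := dvdn_leq (isT : (0 < 2)%N) hd.
      have hgt := prime_gt1 pp.
      have e : p = 2%N by lia.
      by rewrite e in op.
    have : (p%:Z %| v)%Z.
      rewrite (_ : v = x0%:Z * x0%:Z - (x0%:Z * x0%:Z - v)); last by ring.
      by rewrite rpredB // dvdz_mulr.
    by rewrite hv.
  rewrite (eq_bigr (fun y : 'I_p => (if dvz p (y%:Z - x0%:Z) then 1 else 0) + (if dvz p (y%:Z - x1%:Z) then (1 : int) else 0))).
    by rewrite big_split /= !sum_dvd_one.
  move=> y _; rewrite key; have := excl y.
  by case: (dvz p (y%:Z - x0%:Z)); case: (dvz p (y%:Z - x1%:Z)).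
rewrite big1 ?sub0r //.
move=> y _; case: ifP => // hy; exfalso; apply: nex; exists y.
by rewrite -expr2.
Qed.

Lemma sum_const_int (p : nat) (x : int) : \sum_(t < p) x = p%:Z * x.
Proof. by rewrite sumr_const card_ord -mulr_natl natz. Qed.

Lemma T_count (p : nat) (c : int) : prime p -> odd p ->
  \sum_(a1 < p) \sum_(y < p) (if dvz p (y%:Z ^+ 2 - a1%:Z ^+ 2 - c) then 1 else 0 : int)
   = (p%:Z - 1) + (if dvz p c then p%:Z else 0).
Proof.
move=> pp op; have p0 := prime_gt0 pp.
transitivity (\sum_(s < p) \sum_(a1 < p)
   (if dvz p (s%:Z * (s%:Z + 2 * a1%:Z) - c) then 1 else 0 : int)).
  rewrite [RHS]exchange_big /=; apply: eq_bigr => a1 _.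
  pose h (y : int) := (if dvz p (y ^+ 2 - a1%:Z ^+ 2 - c) then 1 else 0 : int).
  have hP : forall x y, (p%:Z %| x - y)%Z -> h x = h y.
    move=> x y hx; rewrite /h.
    have -> : dvz p (x ^+ 2 - a1%:Z ^+ 2 - c) = dvz p (y ^+ 2 - a1%:Z ^+ 2 - c); last by [].
    rewrite (_ : x ^+ 2 - a1%:Z ^+ 2 - c = (x - y) * (x + y) + (y ^+ 2 - a1%:Z ^+ 2 - c)); last by ring.
    by rewrite /dvz rpredDl // dvdz_mulr.
  have c1 : coprimez 1 p%:Z by rewrite coprimezE /= coprime1n.
  transitivity (\sum_(y < p) h y%:Z) => //.
  rewrite -(@sum_reindex _ p 1 a1%:Z h p0 c1 hP).
  apply: eq_bigr => s _; rewrite /h mul1r.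
  by rewrite (_ : (a1%:Z + s%:Z) ^+ 2 - a1%:Z ^+ 2 - c = s%:Z * (s%:Z + 2 * a1%:Z) - c); last by ring.
transitivity (\sum_(s < p) \sum_(t < p) (if dvz p (s%:Z * t%:Z - c) then 1 else 0 : int)).
  apply: eq_bigr => s _.
  pose g (t : int) := (if dvz p (s%:Z * t - c) then 1 else 0 : int).
  have gP : forall x y, (p%:Z %| x - y)%Z -> g x = g y.
    move=> x y hx; rewrite /g.
    have -> : dvz p (s%:Z * x - c) = dvz p (s%:Z * y - c); last by [].
    rewrite (_ : s%:Z * x - c = s%:Z * (x - y) + (s%:Z * y - c)); last by ring.
    by rewrite /dvz rpredDl // dvdz_mull.
  have c2 : coprimez 2 p%:Z.
    by rewrite coprimezE /= prime_coprime // dvdn2 op.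
  exact: (@sum_reindex _ p 2 s%:Z g p0 c2 gP).
move: pp op p0; case: p => [//|p'] pp op p0.
rewrite big_ord_recl /=.
rewrite (eq_bigr (fun _ => if dvz p'.+1 c then 1 else 0 : int)); last first.
  move=> t _; rewrite mul0r sub0r.
  by rewrite /dvz rpredN.
rewrite sum_const_int.
rewrite (eq_bigr (fun _ => 1 : int)); last first.
  move=> k _.
  pose g (t : int) := (if dvz p'.+1 (t - c) then 1 else 0 : int).
  have gP : forall x y, (p'.+1%:Z %| x - y)%Z -> g x = g y.
    move=> x y hx; rewrite /g.
    have -> : dvz p'.+1 (x - c) = dvz p'.+1 (y - c); last by [].
    rewrite (_ : x - c = (x - y) + (y - c)); last by ring.
    by rewrite /dvz rpredDl.
  have ck : coprimez (lift ord0 k)%:Z p'.+1%:Z.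
    rewrite coprimezE /= coprime_sym prime_coprime //.
    apply/negP => hd; have := @dvdn_leq _ _ (isT : (0 < bump 0 k)%N) hd.
    have := ltn_ord k; rewrite /bump /=; lia.
  have := (@sum_reindex _ p'.+1 (lift ord0 k)%:Z 0 g p0 ck gP).
  rewrite /g => e.
  under eq_bigr => t _ do rewrite -[(lift ord0 k)%:Z * t%:Z]add0r.
  by rewrite e (@sum_dvd_one _ p'.+1 c 1 p0).
rewrite sum_const_int mulr1.
case: ifP => _; lia.
Qed.

Lemma S_zero (p : nat) (b : int) : prime p -> odd p -> ~~ dvz p b ->
  \sum_(a1 < p) \sum_(a2 < p) legendre (Qf b a1%:Z a2%:Z) p = 0.
Proof.
move=> pp op pb; have p0 := prime_gt0 pp.
transitivity (\sum_(a2 < p) \sum_(a1 < p)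
   (\sum_(y < p) (if dvz p (y%:Z ^+ 2 - a1%:Z ^+ 2 - b * a2%:Z ^+ 2) then 1 else 0 : int) - 1)).
  rewrite exchange_big; apply: eq_bigr => a2 _; apply: eq_bigr => a1 _.
  rewrite legendre_count //; congr (_ - _); apply: eq_bigr => y _; rewrite /Qf.
  by rewrite (_ : y%:Z ^+ 2 - (a1%:Z ^+ 2 + b * a2%:Z ^+ 2) = y%:Z ^+ 2 - a1%:Z ^+ 2 - b * a2%:Z ^+ 2) //; ring.
rewrite (eq_bigr (fun a2 : 'I_p => (if dvz p (a2%:Z - 0) then p%:Z else 0) - 1)); last first.
  move=> a2 _; rewrite sumrB T_count // sum_const_int mulr1.
  have -> : dvz p (b * a2%:Z ^+ 2) = dvz p (a2%:Z - 0).
    by rewrite dvz_EuclidM // (negbTE pb) /= dvz_sq // subr0.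
  ring.
by rewrite sumrB sum_dvd_one // sum_const_int mulr1 subrr.
Qed.

Lemma Qf_periodic (n : nat) (b x1 x2 y1 y2 : int) : dvz n (x1 - y1) -> dvz n (x2 - y2) ->
  dvz n (Qf b x1 x2 - Qf b y1 y2).
Proof.
move=> h1 h2; rewrite /Qf.
rewrite (_ : x1 ^+ 2 + b * x2 ^+ 2 - (y1 ^+ 2 + b * y2 ^+ 2) =
   (x1 - y1) * (x1 + y1) + (x2 - y2) * (b * (x2 + y2))); last by ring.
by rewrite /dvz rpredD // dvdz_mulr.
Qed.

Lemma inner_zero (m p : nat) (b w1 w2 : int) : prime p -> odd p -> ~~ dvz p b ->
  coprimez m%:Z p%:Z ->
  \sum_(k1 < p) \sum_(k2 < p) legendre (Qf b (w1 + m%:Z * k1%:Z) (w2 + m%:Z * k2%:Z)) p = 0.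
Proof.
move=> pp op pb cop; have p0 := prime_gt0 pp.
have P2 : forall x1, forall x y, (p%:Z %| x - y)%Z ->
    legendre (Qf b x1 x) p = legendre (Qf b x1 y) p.
  move=> x1 x y h; apply: legendre_periodic; apply: Qf_periodic => //.
  by rewrite subrr /dvz dvdz0.
have P1 : forall x2, forall x y, (p%:Z %| x - y)%Z ->
    legendre (Qf b x x2) p = legendre (Qf b y x2) p.
  move=> x2 x y h; apply: legendre_periodic; apply: Qf_periodic => //.
  by rewrite subrr /dvz dvdz0.
under eq_bigr => k1 _ do rewrite (@sum_reindex _ p m%:Z w2 (fun x => legendre (Qf b (w1 + m%:Z * k1%:Z) x) p) p0 cop (P2 _)).
rewrite exchange_big /=.
under eq_bigr => a2 _ do rewrite (@sum_reindex _ p m%:Z w1 (fun x => legendre (Qf b x a2%:Z) p) p0 cop (P1 _)).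
by rewrite exchange_big /= S_zero.
Qed.

Lemma jac_sum_zero (m p : nat) (b : int) : prime p -> odd p -> ~~ dvz p b -> (0 < m)%N ->
  ~~ (p %| m)%N ->
  \sum_(u1 < m * p) \sum_(u2 < m * p) jacobi (Qf b u1%:Z u2%:Z) (m * p)%N = 0.
Proof.
move=> pp op pb m0 pm.
have cop : coprimez m%:Z p%:Z by rewrite coprimezE /= coprime_sym prime_coprime.
rewrite (@sum_block _ m p (fun x => \sum_(u2 < m * p) jacobi (Qf b x u2%:Z) (m * p)%N)).
under eq_bigr => k1 _ do under eq_bigr => w1 _ do
  rewrite (@sum_block _ m p (fun x => jacobi (Qf b (w1%:Z + m%:Z * k1%:Z) x) (m * p)%N)).
have J : forall (w1 w2 : 'I_m) (k1 k2 : 'I_p),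
  jacobi (Qf b (w1%:Z + m%:Z * k1%:Z) (w2%:Z + m%:Z * k2%:Z)) (m * p)%N =
  legendre (Qf b (w1%:Z + m%:Z * k1%:Z) (w2%:Z + m%:Z * k2%:Z)) p * jacobi (Qf b w1%:Z w2%:Z) m.
  move=> w1 w2 k1 k2; rewrite jacobi_mulp //; congr (_ * _); apply: jacobi_periodic.
  apply: Qf_periodic.
    rewrite (_ : w1%:Z + m%:Z * k1%:Z - w1%:Z = m%:Z * k1%:Z); last by ring.
    by rewrite /dvz dvdz_mulr // dvdzz.
  rewrite (_ : w2%:Z + m%:Z * k2%:Z - w2%:Z = m%:Z * k2%:Z); last by ring.
  by rewrite /dvz dvdz_mulr // dvdzz.
transitivity (\sum_(w1 < m) \sum_(w2 < m)
   (\sum_(k1 < p) \sum_(k2 < p) legendre (Qf b (w1%:Z + m%:Z * k1%:Z) (w2%:Z + m%:Z * k2%:Z)) p)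
     * jacobi (Qf b w1%:Z w2%:Z) m).
  rewrite exchange_big /=; apply: eq_bigr => w1 _.
  under eq_bigr => k1 _ do rewrite exchange_big /=.
  rewrite exchange_big /=; apply: eq_bigr => w2 _.
  rewrite mulr_suml; apply: eq_bigr => k1 _; rewrite mulr_suml; apply: eq_bigr => k2 _.
  by rewrite J.
by apply: big1 => w1 _; apply: big1 => w2 _; rewrite inner_zero // mul0r.
Qed.

Lemma coprime_all_primes (m n : nat) : (0 < n)%N ->
  coprime m n = all (fun p => ~~ (p %| m)%N) (primes n).
Proof.
move=> n0; case: (posnP m) => [->|m0].
  rewrite /coprime gcd0n; case: (ltnP n 2) => hn.
    have -> : n = 1%N by lia.
    by [].
  have : (pdiv n \in primes n) by rewrite mem_primes pdiv_prime // n0 pdiv_dvd.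
  have -> : (n == 1%N) = false by apply/negbTE; lia.
  by move=> hp; apply/esym/negbTE/allPn; exists (pdiv n) => //; rewrite dvdn0.
rewrite coprime_has_primes // -all_predC; apply: eq_in_all => p hp /=.
by rewrite mem_primes m0 /=; move: hp; rewrite mem_primes => /andP [-> _].
Qed.

Lemma prod_indic (R : nzRingType) (s : seq nat) (v : int) :
  \prod_(p <- s) (if dvz p v then 0 else 1 : R) =
  if all (fun p => ~~ (p %| `|v|)%N) s then 1 else 0.
Proof.
elim: s => [|p s IH] /=; first by rewrite big_nil.
rewrite big_cons IH /dvz dvdzE /=.
by case: (p %| `|v|)%N => /=; rewrite ?mul0r ?mul1r.
Qed.

Lemma hPD_coprime (R : nzRingType) (q2 : nat) (a2 x1 x2 : int) : (0 < q2)%N ->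
  hPD R a2 (primes q2) [::] x1 x2 = if coprimez (Qf a2 x1 x2) q2%:Z then 1 else 0.
Proof.
move=> q0; rewrite /hPD big_nil /dvz dvdzE /= dvd1n mul1r prod_indic.
by rewrite coprimezE /= coprime_all_primes.
Qed.

Lemma residue_sum (V : nmodType) (q1 : nat) (G : int -> V) (x : int) : (0 < q1)%N ->
  periodic G q1 -> G x = \sum_(u < q1) (if dvz q1 (x - u%:Z) then G u%:Z else 0).
Proof.
move=> q0 GP.
rewrite (eq_bigr (fun u : 'I_q1 => if dvz q1 (u%:Z - x) then G x else 0)).
  by rewrite sum_dvd_one.
move=> u _.
have -> : dvz q1 (x - u%:Z) = dvz q1 (u%:Z - x).
  by rewrite /dvz -opprB rpredN.
case: ifP => // h; apply: GP; by [].
Qed.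

Lemma Lsum_decomp (R : realFieldType) (q1 q2 N : nat) (a2 : int) : (0 < q1)%N -> (0 < q2)%N ->
  (Lsum q1 q2 N a2)%:~R = \sum_(u1 < q1) \sum_(u2 < q1) ((jacobi (Qf a2 u1%:Z u2%:Z) q1)%:~R *
      Csum (2 * N).+1 (- N%:Z) q1 u1%:Z u2%:Z (hPD R a2 (primes q2) [::])) :> R.
Proof.
move=> q0 q20.
set n := (2 * N).+1; set y := - N%:Z; set h := hPD R a2 (primes q2) [::].
pose chi (x1 x2 : int) : R := (jacobi (Qf a2 x1 x2) q1)%:~R.
have chiP1 : forall x2, periodic (fun x1 => chi x1 x2) q1.
  move=> x2 x x' hx; rewrite /chi (@jacobi_periodic q1 _ (Qf a2 x' x2)) //.
  by apply: Qf_periodic => //; rewrite subrr /dvz dvdz0.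
have chiP2 : forall x1, periodic (fun x2 => chi x1 x2) q1.
  move=> x1 x x' hx; rewrite /chi (@jacobi_periodic q1 _ (Qf a2 x1 x')) //.
  by apply: Qf_periodic => //; rewrite subrr /dvz dvdz0.
pose E (u1 u2 : 'I_q1) (j i : 'I_n) : R :=
  if dvz q1 (y + j%:Z - u2%:Z) then
    (if dvz q1 (y + i%:Z - u1%:Z) then chi u1%:Z u2%:Z * h (y + i%:Z) (y + j%:Z) else 0)
  else 0.
transitivity (\sum_(i < n) \sum_(j < n) \sum_(u1 < q1) \sum_(u2 < q1) E u1 u2 j i).
  rewrite /Lsum rmorph_sum; apply: eq_bigr => i _; rewrite rmorph_sum; apply: eq_bigr => j _.
  rewrite /=.
  have -> : (if coprimez ((i%:Z - N%:Z) ^+ 2 + a2 * (j%:Z - N%:Z) ^+ 2) q2%:Z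
       then jacobi ((i%:Z - N%:Z) ^+ 2 + a2 * (j%:Z - N%:Z) ^+ 2) q1 else 0)%:~R
     = chi (y + i%:Z) (y + j%:Z) * h (y + i%:Z) (y + j%:Z).
    rewrite /h hPD_coprime // /chi /Qf /y (addrC (- N%:Z)) (addrC (- N%:Z)).
    by case: ifP => _; rewrite ?mulr1 ?mulr0.
  rewrite (@residue_sum _ q1 (fun x1 => chi x1 (y + j%:Z)) (y + i%:Z) q0 (chiP1 _)) mulr_suml.
  apply: eq_bigr => u1 _.
  rewrite (@residue_sum _ q1 (fun x2 => chi u1%:Z x2) (y + j%:Z) q0 (chiP2 _)).
  rewrite /E; case: ifP => h1; last first.
    by rewrite mul0r big1 // => u2 _; case: ifP.
  rewrite mulr_suml; apply: eq_bigr => u2 _.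
  by case: ifP => _; rewrite ?mul0r.
symmetry.
transitivity (\sum_(u1 < q1) \sum_(u2 < q1) \sum_(j < n) \sum_(i < n) E u1 u2 j i).
  apply: eq_bigr => u1 _; apply: eq_bigr => u2 _.
  rewrite /Csum mulr_sumr; apply: eq_bigr => j _; rewrite /E.
  case: ifP => _; last by rewrite mulr0 big1.
  rewrite mulr_sumr; apply: eq_bigr => i _.
  by case: ifP => _; rewrite ?mulr0.
under eq_bigr => u1 _ do under eq_bigr => u2 _ do rewrite exchange_big /=.
under eq_bigr => u1 _ do rewrite exchange_big /=.
rewrite exchange_big /=.
apply: eq_bigr => i _.
under eq_bigr => u1 _ do rewrite exchange_big /=.
by rewrite exchange_big.
Qed.

Lemma jacobi_norm (v : int) (n : nat) : `|jacobi v n| <= 1.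
Proof.
rewrite /jacobi; apply: (big_ind (fun x : int => `|x| <= 1)) => //.
  move=> x y hx hy; rewrite normrM; apply: mulr_ile1 => //.
move=> p _; rewrite normrX; apply: exprn_ile1 => //.
by rewrite /legendre; case: ifP => // _; case: ifP.
Qed.

Lemma jacobi_normR (R : realDomainType) (v : int) (n : nat) : `|(jacobi v n)%:~R : R| <= 1.
Proof.
have := jacobi_norm v n; set z := jacobi v n => hz.
have : z = -1 \/ z = 0 \/ z = 1 by lia.
by case=> [->|[->|->]]; rewrite ?normrN ?normr0 ?normr1.
Qed.

Lemma final_bound (R : realFieldType) (q1 : nat) (chi C : 'I_q1 -> 'I_q1 -> R) (A E : R) :
  \sum_(u1 < q1) \sum_(u2 < q1) chi u1 u2 = 0 -> (forall u1 u2, `|chi u1 u2| <= 1) -> 0 <= E ->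
  (forall u1 u2, `|C u1 u2 - A| <= E) ->
  `|\sum_(u1 < q1) \sum_(u2 < q1) chi u1 u2 * C u1 u2| <= q1%:R ^+ 2 * E.
Proof.
move=> s0 c1 E0 hC.
have -> : \sum_(u1 < q1) \sum_(u2 < q1) chi u1 u2 * C u1 u2 =
   \sum_(u1 < q1) \sum_(u2 < q1) chi u1 u2 * (C u1 u2 - A) +
   (\sum_(u1 < q1) \sum_(u2 < q1) chi u1 u2) * A.
  rewrite mulr_suml -big_split /=; apply: eq_bigr => u1 _.
  rewrite mulr_suml -big_split /=; apply: eq_bigr => u2 _; ring.
rewrite s0 mul0r addr0.
apply: le_trans (ler_norm_sum _ _ _) _.
apply: (@le_trans _ _ (\sum_(u1 < q1) (q1%:R * E))).
  apply: ler_sum => u1 _; apply: le_trans (ler_norm_sum _ _ _) _.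
  have -> : q1%:R * E = \sum_(u2 < q1) E by rewrite sumr_const card_ord mulr_natl.
  apply: ler_sum => u2 _; rewrite normrM -[E]mul1r.
  by apply: ler_pM => //.
have -> : q1%:R ^+ 2 * E = (q1%:R * E) *+ q1 by rewrite -mulr_natl; ring.
by rewrite sumr_const card_ord.
Qed.

Lemma dvd_rad_primes (q p : nat) : prime p -> (p %| radical q)%N -> p \in primes q.
Proof.
move=> pp; rewrite /radical Euclid_dvd_prod // big_has => /hasP [r hr hpr].
have pr : prime r by move: hr; rewrite mem_primes => /andP [].
by move: hpr; rewrite dvdn_prime2 // => /eqP ->.
Qed.

Lemma rad_sqfree (q p : nat) : prime p -> ~~ (p * p %| radical q)%N.
Proof.
move=> pp; apply/negP => hd.
have hp : p \in primes q by apply: dvd_rad_primes => //; apply: dvdn_trans hd; apply: dvdn_mulr.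
move: hd; rewrite /radical (big_rem p hp) /= dvdn_pmul2l ?prime_gt0 // => hd.
move: hd; rewrite Euclid_dvd_prod // big_has => /hasP [r hr hpr].
have pr : prime r.
  by move: hr; rewrite mem_rem_uniq ?primes_uniq // => /andP [_]; rewrite mem_primes => /andP [].
move: hpr; rewrite dvdn_prime2 // => /eqP e.
by move: hr; rewrite e mem_rem_uniq ?primes_uniq // inE eqxx.
Qed.


Lemma Lsum_N0 (q1 q2 : nat) (a2 : int) : (1 < q1)%N -> Lsum q1 q2 0 a2 = 0.
Proof.
move=> q1g; rewrite /Lsum muln0 !big_ord1 /=.
have -> : (0%:Z - 0%:Z) ^+ 2 + a2 * (0%:Z - 0%:Z) ^+ 2 = 0 by ring.
case: ifP => // _.
have hp : pdiv q1 \in primes q1 by rewrite mem_primes pdiv_prime // pdiv_dvd andbT; lia.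
rewrite /jacobi (big_rem _ hp) /=.
have -> : legendre 0 (pdiv q1) = 0 by rewrite /legendre dvdz0.
rewrite expr0n.
have : (0 < logn (pdiv q1) q1)%N by rewrite logn_gt0.
by case: (logn (pdiv q1) q1) => //= k _; rewrite mul0r.
Qed.

Lemma main_bound (R : realFieldType) (q : nat) (a2 : int) (q1 q2 N : nat) :
  odd q -> coprimez a2 q%:Z -> (1 < q1)%N -> (0 < q2)%N -> (q1 * q2)%N = radical q ->
  (0 < N)%N ->
  `|(Lsum q1 q2 N a2)%:~R : R| <= q1%:R ^+ 2 * (4 ^+ size (primes q2) * (7 * N%:R)).
Proof.
move=> oq cop q1g q20 hrad N0.
have q10 : (0 < q1)%N by lia.
rewrite Lsum_decomp //.
set p := pdiv q1.
have pp : prime p by apply: pdiv_prime.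
have pq1 : (p %| q1)%N by apply: pdiv_dvd.
have q1rad : (q1 %| radical q)%N by rewrite -hrad dvdn_mulr.
have pq : p \in primes q by apply: dvd_rad_primes => //; apply: dvdn_trans q1rad.
have q0 : (0 < q)%N by move: pq; rewrite mem_primes => /and3P [].
have pdq : (p %| q)%N by move: pq; rewrite mem_primes => /and3P [].
have op : odd p.
  by case: (even_prime pp) => // e; move: pdq; rewrite e dvdn2 oq.
have pa : ~~ dvz p a2.
  apply/negP; rewrite /dvz dvdzE /= => ha.
  move: cop; rewrite coprimezE /= => cop.
  have := coprime_dvdl ha cop; move/(coprime_dvdr pdq).
  by rewrite /coprime gcdnn => /eqP e; move: (prime_gt1 pp); rewrite e.
set m := (q1 %/ p)%N.
have eq1 : q1 = (m * p)%N by rewrite /m divnK.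
have m0 : (0 < m)%N by move: q10; rewrite eq1 muln_gt0 => /andP [].
have pm : ~~ (p %| m)%N.
  apply/negP => h.
  have : (p * p %| radical q)%N.
    apply: dvdn_trans q1rad; rewrite eq1; exact: dvdn_mul.
  by rewrite (negbTE (@rad_sqfree q p pp)).
have hz : \sum_(u1 < q1) \sum_(u2 < q1) ((jacobi (Qf a2 u1%:Z u2%:Z) q1)%:~R : R) = 0.
  have : \sum_(u1 < q1) \sum_(u2 < q1) jacobi (Qf a2 u1%:Z u2%:Z) q1 = 0.
    by move: pm m0; rewrite eq1 => pm' m0'; apply: jac_sum_zero.
  move=> h0.
  have -> : \sum_(u1 < q1) \sum_(u2 < q1) ((jacobi (Qf a2 u1%:Z u2%:Z) q1)%:~R : R) =
     ((\sum_(u1 < q1) \sum_(u2 < q1) jacobi (Qf a2 u1%:Z u2%:Z) q1)%:~R : R).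
    by rewrite rmorph_sum; apply: eq_bigr => u1 _; rewrite rmorph_sum.
  by rewrite h0.
have uP := primes_uniq q2.
have aP : all prime (primes q2) by apply/allP => r; rewrite mem_primes => /andP [].
have cP : all (coprime q1) (primes q2).
  apply/allP => r hr; have pr : prime r by move: hr; rewrite mem_primes => /andP [].
  have rq2 : (r %| q2)%N by move: hr; rewrite mem_primes => /and3P [].
  rewrite coprime_sym prime_coprime //; apply/negP => rq1.
  have : (r * r %| radical q)%N by rewrite -hrad; exact: dvdn_mul.
  by rewrite (negbTE (@rad_sqfree q r pr)).
have [A hA] := @sieve R q1 (2 * N).+1 (- N%:Z) a2 (primes q2) [::] q10 uP isT aP isT
   (introT allP (fun r _ => isT)) cP isT.
set Z := (2 * (2 * N).+1%:R / q1%:R + 1 : R).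
have Z0 : 0 <= Z by rewrite /Z addr_ge0 // divr_ge0 // mulr_ge0.
have hb := @final_bound R q1 (fun u1 u2 => (jacobi (Qf a2 u1%:Z u2%:Z) q1)%:~R)
   (fun u1 u2 => Csum (2 * N).+1 (- N%:Z) q1 u1%:Z u2%:Z (hPD R a2 (primes q2) [::]))
   A (4 ^+ size (primes q2) * 2 ^+ size [::] * Z) hz (fun _ _ => jacobi_normR _ _ _)
   (mulr_ge0 (mulr_ge0 (exprn_ge0 _ (ler0n _ 4)) (exprn_ge0 _ (ler0n _ 2))) Z0) (fun u1 u2 => hA u1 u2).
apply: le_trans hb _.
rewrite expr0 mulr1; apply: ler_wpM2l; first by apply: exprn_ge0.
apply: ler_wpM2l; first by apply: exprn_ge0.
have q1R : 1 <= q1%:R :> R by rewrite ler1n; lia.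
have NR : 1 <= N%:R :> R by rewrite ler1n.
have : 2 * (2 * N).+1%:R / q1%:R <= 2 * (2 * N).+1%:R :> R.
  rewrite ler_pdivrMr; last by lra.
  by rewrite ler_peMr // mulr_ge0.
have e : (2 * N).+1%:R = 2 * N%:R + 1 :> R by rewrite -natr1 natrM.
rewrite /Z e; lra.
Qed.

Lemma rad_le (q : nat) : (0 < q)%N -> (radical q <= q)%N.
Proof.
move=> q0; rewrite {2}(prod_prime_decomp q0) prime_decompE big_map /radical /=.
rewrite big_seq [X in (_ <= X)%N]big_seq; apply: leq_prod => p hp.
have p0 : (0 < p)%N by move: hp; rewrite mem_primes => /and3P [/prime_gt0].
have k1 : (0 < logn p q)%N by rewrite logn_gt0.
by rewrite -{1}(expn1 p) leq_pexp2l.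
Qed.

Lemma prod_cond_const (R : pzSemiRingType) (s : seq nat) (P : pred nat) (x : R) :
  \prod_(i <- s) (if P i then x else 1) = x ^+ count P s.
Proof.
elim: s => [|a s IH] /=; first by rewrite big_nil expr0.
by rewrite big_cons IH; case: (P a); rewrite ?exprS ?mul1r ?add0n.
Qed.

Lemma prod_const_seq (R : pzSemiRingType) (s : seq nat) (x : R) :
  \prod_(i <- s) x = x ^+ size s.
Proof.
elim: s => [|a s IH] /=; first by rewrite big_nil expr0.
by rewrite big_cons IH exprS.
Qed.

Lemma powR_prod (R : realType) (s : seq nat) (e : R) :
  \prod_(p <- s) (p%:R `^ e) = (\prod_(p <- s) p)%N%:R `^ e.
Proof.
elim: s => [|a s IH] /=; first by rewrite !big_nil powR1.
by rewrite !big_cons IH natrM powRM.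
Qed.

Lemma omega_bound (R : realType) (eps : R) : 0 < eps -> exists K : R, 0 < K /\
  forall q : nat, (0 < q)%N -> 4 ^+ size (primes q) <= K * q%:R `^ eps.
Proof.
move=> e0.
set t := (4 : R) `^ eps^-1.
set B := (Num.Def.trunc t).+1.
have tB : t < B%:R by apply: truncnS_gt.
have t0 : 0 <= t by apply: powR_ge0.
have big4 : forall p : nat, (B <= p)%N -> 4 <= p%:R `^ eps.
  move=> p hp.
  have h1 : t `^ eps = 4.
    by rewrite /t -powRrM mulVf ?gt_eqF // powRr1.
  rewrite -h1; apply: ge0_ler_powR; first exact: ltW.
    by rewrite nnegrE.
    by rewrite nnegrE ler0n.
  by apply: le_trans (ltW tB) _; rewrite ler_nat.
have ge1 : forall p : nat, (0 < p)%N -> 1 <= p%:R `^ eps.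
  move=> p p0; apply: (@le_trans _ _ (1 `^ eps)); first by rewrite powR1.
  by apply: ge0_ler_powR; [exact: ltW| rewrite nnegrE ler01 | rewrite nnegrE ler0n | rewrite ler1n].
exists (4 ^+ B); split; first by apply: exprn_gt0.
move=> q q0.
set s := primes q.
have sp : forall p, p \in s -> prime p by move=> p; rewrite mem_primes => /andP [].
apply: (@le_trans _ _ (\prod_(p <- s) ((if (p < B)%N then 4 else 1) * p%:R `^ eps))).
  rewrite -prod_const_seq big_seq [X in _ <= X]big_seq; apply: ler_prod => p hp.
  rewrite ler0n /=; have p0 := prime_gt0 (sp p hp).
  case: ltnP => hpB.
    by rewrite -[X in X <= _]mulr1 ler_wpM2l // ge1.
  by rewrite mul1r big4.
rewrite big_split /= prod_cond_const powR_prod.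
apply: ler_pM.
- by apply: exprn_ge0.
- by apply: powR_ge0.
- apply: ler_weXn2l; first by rewrite ler1n.
  rewrite -size_filter.
  have : {subset filter (fun p => (p < B)%N) s <= iota 0 B}.
    by move=> p; rewrite mem_filter mem_iota add0n => /andP [].
  move/uniq_leq_size; rewrite size_iota; apply.
  by rewrite filter_uniq // primes_uniq.
- apply: ge0_ler_powR; [exact: ltW| by rewrite nnegrE ler0n | by rewrite nnegrE ler0n |].
  by rewrite ler_nat rad_le.
Qed.

Theorem mainTheorem8 (R : realType) (eps : R) :
  0 < eps ->
  exists C : R, 0 < C /\
    forall (q : nat) (a2 : int) (q1 q2 N : nat),
      odd q -> coprimez a2 q%:Z ->
      (1 < q1)%N -> (0 < q2)%N -> (q1 * q2)%N = radical q ->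
      (N <= q)%N ->
      `|(Lsum q1 q2 N a2)%:~R : R| <=
        C * (N%:R : R) * (q1%:R : R) ^+ 2 * powR (q%:R : R) eps.
Proof.
move=> e0; have [K [K0 hK]] := @omega_bound R eps e0.
exists (7 * K); split; first by rewrite mulr_gt0.
move=> q a2 q1 q2 N oq cop q1g q20 hrad hN.
case: (posnP N) => [->|N0].
  by rewrite Lsum_N0 // mulr0z normr0 mulr0 !mul0r.
have hb := @main_bound R q a2 q1 q2 N oq cop q1g q20 hrad N0.
apply: le_trans hb _.
have q0 : (0 < q)%N by case: q oq {hN hrad cop}.
have hs : (size (primes q2) <= size (primes q))%N.
  apply: uniq_leq_size; first exact: primes_uniq.
  move=> r hr; have pr : prime r by move: hr; rewrite mem_primes => /andP [].
  apply: dvd_rad_primes => //; rewrite -hrad; apply: dvdn_mull.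
  by move: hr; rewrite mem_primes => /and3P [].
have h4 : 4 ^+ size (primes q2) <= K * q%:R `^ eps :> R.
  apply: le_trans (hK q q0); apply: ler_weXn2l => //; by rewrite ler1n.
have NR : 0 <= N%:R :> R by [].
have hq : 0 <= q1%:R ^+ 2 :> R by apply: exprn_ge0.
have : 4 ^+ size (primes q2) * (7 * N%:R) <= K * q%:R `^ eps * (7 * N%:R) :> R.
  by apply: ler_wpM2r => //; rewrite mulr_ge0.
move/(ler_wpM2l hq) => h.
apply: le_trans h _.
rewrite (_ : q1%:R ^+ 2 * (K * q%:R `^ eps * (7 * N%:R)) = 7 * K * N%:R * q1%:R ^+ 2 * q%:R `^ eps); last by ring.
exact: lexx.
Qed.
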